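(* Let $D$ be a directed graph and $(V(D),\mathcal C)$ its corresponding connectoid. Then the end space of $D$ is homeomorphic to the end space of $(V(D),\mathcal C)$.
   Context: A connectoid is given by a set $S$ and a set $\mathcal F$ of finite subsets of $S$ such that (i) $F\cup F'\in\mathcal F$ whenever $F,F'\in\mathcal F$ and $F\cap F'\neq\emptyset$, and (ii) $\emptyset\in\mathcal F$ and $\{s\}\in\mathcal F$ for every $s\in S$. A set $C\subseteq S$ is connected if for all $x,y\in C$ there is $F\in\mathcal F$ with $F\subseteq C$ and $x,y\in F$. For $S'\subseteq S$, $\mathcal K(S')$ is the set of maximal connected subsets (components) of $S'$. The corresponding connectoid of a directed graph $D$ has $S=V(D)$ and $\mathcal F$ the set of vertex sets of finite strongly connected subgraphs of $D$; its connected sets are exactly the vertex sets of strongly connected subgraphs of $D$. A necklace is a connected set $N$ for which there is a family $(H_n)_{n\in\mathbb N}$ of finite connected sets with $N=\bigcup_n H_n$ and $H_i\cap H_j\neq\emptyset$ iff $|i-j|\le 1$. For finite $X\subseteq S$, the $X$-tail of $N$ is the unique element of $\mathcal K(N\setminus X)$ containing all but finitely many elements of $N$. Two necklaces are equivalent if for every finite $X$ their $X$-tails lie in the same element of $\mathcal K(S\setminus X)$; ends of the connectoid are the equivalence classes; $K(X,\omega)$ is the element of $\mathcal K(S\setminus X)$ containing the $X$-tails of the necklaces of $\omega$; the end space has the topology generated by the sets $\{\omega:K(X,\omega)=K\}$ for finite $X$ and $K\in\mathcal K(S\setminus X)$. Ends of a directed graph $D$ (Bürger–Melcher): a directed ray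 is a ray with all edges oriented away from its first vertex. A directed ray $R$ is solid if for every finite $A\subseteq V(D)$ it has a tail in some strong component of $D-A$. Two solid rays are equivalent if for every finite $A\subseteq V(D)$ they have tails in the same strong component of $D-A$; the equivalence classes are the ends of $D$, and $K(A,\omega)$ is that strong component. The end space of $D$ carries the topology generated by the sets $\{\omega: K(A,\omega)=K\}$ for finite $A\subseteq V(D)$ and strong components $K$ of $D-A$. *)

(* Defs.v *)
From Stdlib Require Import List Relations Arith.
Import ListNotations.

Definition finite {T : Type} (X : T -> Prop) : Prop :=
  exists l : list T, forall x, X x -> In x l.
Definition subset {T : Type} (A B : T -> Prop) : Prop := forall x, A x -> B x.
Definition setminus {T : Type} (A X : T -> Prop) : T -> Prop := fun x => A x /\ ~ X x.
Definition compl {T : Type} (X : T -> Prop) : T -> Prop := fun x => ~ X x.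

Inductive gen_open {T : Type} (B : (T -> Prop) -> Prop) : (T -> Prop) -> Prop :=
| go_base : forall U, B U -> gen_open B U
| go_full : gen_open B (fun _ => True)
| go_inter : forall U W, gen_open B U -> gen_open B W ->
    gen_open B (fun x => U x /\ W x)
| go_union : forall Fam : (T -> Prop) -> Prop,
    (forall U, Fam U -> gen_open B U) ->
    gen_open B (fun x => exists U, Fam U /\ U x).

Definition homeomorphic {T1 T2 : Type}
  (B1 : (T1 -> Prop) -> Prop) (B2 : (T2 -> Prop) -> Prop) : Prop :=
  exists (f : T1 -> T2) (g : T2 -> T1),
    (forall x, g (f x) = x) /\ (forall y, f (g y) = y) /\
    (forall U, gen_open B2 U -> gen_open B1 (fun x => U (f x))) /\
    (forall U, gen_open B1 U -> gen_open B2 (fun y => U (g y))).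

Definition is_connectoid {S : Type} (F : (S -> Prop) -> Prop) : Prop :=
  (forall A, F A -> finite A) /\
  (forall A B, F A -> F B -> (exists x, A x /\ B x) -> F (fun x => A x \/ B x)) /\
  F (fun _ => False) /\ (forall s, F (fun x => x = s)).

Definition connected {S : Type} (F : (S -> Prop) -> Prop) (C : S -> Prop) : Prop :=
  forall x y, C x -> C y -> exists A, F A /\ subset A C /\ A x /\ A y.

Definition is_comp {S : Type} (F : (S -> Prop) -> Prop) (S' C : S -> Prop) : Prop :=
  subset C S' /\ connected F C /\
  (forall C', subset C C' -> subset C' S' -> connected F C' -> subset C' C).

Definition necklace {S : Type} (F : (S -> Prop) -> Prop) (N : S -> Prop) : Prop :=
  connected F N /\
  exists H : nat -> S -> Prop,
    (forall n, finite (H n) /\ connected F (H n)) /\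
    (forall x, N x <-> exists n, H n x) /\
    (forall i j, (exists x, H i x /\ H j x) <-> (i <= j + 1 /\ j <= i + 1)).

Definition is_tail {S : Type} (F : (S -> Prop) -> Prop) (X N T : S -> Prop) : Prop :=
  is_comp F (setminus N X) T /\ finite (setminus N T).

Definition tail_in {S : Type} (F : (S -> Prop) -> Prop) (X N K : S -> Prop) : Prop :=
  exists T, is_tail F X N T /\ subset T K.

Definition necklace_equiv {S : Type} (F : (S -> Prop) -> Prop) (N N' : S -> Prop) : Prop :=
  forall X, finite X ->
    exists K, is_comp F (compl X) K /\ tail_in F X N K /\ tail_in F X N' K.

Definition is_cend {S : Type} (F : (S -> Prop) -> Prop) (w : (S -> Prop) -> Prop) : Prop :=
  exists N, necklace F N /\ w = (fun N' => necklace F N' /\ necklace_equiv F N N').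

Definition cend {S : Type} (F : (S -> Prop) -> Prop) : Type := { w | is_cend F w }.

Definition cK {S : Type} (F : (S -> Prop) -> Prop) (X : S -> Prop) (w : cend F)
  (K : S -> Prop) : Prop :=
  is_comp F (compl X) K /\ forall N, proj1_sig w N -> tail_in F X N K.

Definition cend_subbase {S : Type} (F : (S -> Prop) -> Prop) : (cend F -> Prop) -> Prop :=
  fun U => exists X K, finite X /\ is_comp F (compl X) K /\
                      U = (fun w => cK F X w K).

Definition strongly_connected {V : Type} (E : V -> V -> Prop) (C : V -> Prop) : Prop :=
  forall x y, C x -> C y ->
    clos_refl_trans V (fun a b => E a b /\ C a /\ C b) x y.

(* The corresponding connectoid: F = vertex sets of finite strongly connected
   subgraphs of D. *)
Definition digraph_F {V : Type} (E : V -> V -> Prop) : (V -> Prop) -> Prop :=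
  fun C => finite C /\ strongly_connected E C.

Definition strong_comp {V : Type} (E : V -> V -> Prop) (A K : V -> Prop) : Prop :=
  subset K (compl A) /\ strongly_connected E K /\
  (forall K', subset K K' -> subset K' (compl A) -> strongly_connected E K' ->
     subset K' K).

Definition directed_ray {V : Type} (E : V -> V -> Prop) (r : nat -> V) : Prop :=
  (forall m n, r m = r n -> m = n) /\ (forall n, E (r n) (r (S n))).

Definition has_tail_in {V : Type} (r : nat -> V) (K : V -> Prop) : Prop :=
  exists n, forall m, n <= m -> K (r m).

Definition solid {V : Type} (E : V -> V -> Prop) (r : nat -> V) : Prop :=
  directed_ray E r /\
  forall A, finite A -> exists K, strong_comp E A K /\ has_tail_in r K.

Definition ray_equiv {V : Type} (E : V -> V -> Prop) (r r' : nat -> V) : Prop :=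
  forall A, finite A ->
    exists K, strong_comp E A K /\ has_tail_in r K /\ has_tail_in r' K.

Definition is_dend {V : Type} (E : V -> V -> Prop) (w : (nat -> V) -> Prop) : Prop :=
  exists r, solid E r /\ w = (fun r' => solid E r' /\ ray_equiv E r r').

Definition dend {V : Type} (E : V -> V -> Prop) : Type := { w | is_dend E w }.

Definition dK {V : Type} (E : V -> V -> Prop) (A : V -> Prop) (w : dend E)
  (K : V -> Prop) : Prop :=
  strong_comp E A K /\ forall r, proj1_sig w r -> has_tail_in r K.

Definition dend_subbase {V : Type} (E : V -> V -> Prop) : (dend E -> Prop) -> Prop :=
  fun U => exists A K, finite A /\ strong_comp E A K /\
                      U = (fun w => dK E A w K).

(* Main.v *)
Require Import Defs.
From Stdlib Require Import List Relations Arith Lia Classical ClassicalEpsilon FunctionalExtensionality PropExtensionality ProofIrrelevance.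
Import ListNotations.

Lemma maxocc (P : nat -> Prop) t T : P t -> (forall s, P s -> s < T) ->
  exists s, P s /\ forall s', P s' -> s' <= s.
Proof.
  intros Pt HT.
  assert (G : forall n t, P t -> (forall s, P s -> s < t + n) -> exists s, P s /\ forall s', P s' -> s' <= s).
  { induction n as [|n IH]; intros t0 Pt0 Hb.
    - specialize (Hb t0 Pt0); lia.
    - destruct (classic (exists s, P s /\ t0 < s)) as [[s [Ps Hs]]|Hno].
      + apply (IH s Ps). intros s' Ps'; specialize (Hb s' Ps'); lia.
      + exists t0; split; auto. intros s' Ps'. destruct (le_lt_dec s' t0); auto.
        exfalso; eauto. }
  apply (G T t Pt). intros s Ps; specialize (HT s Ps); lia.
Qed.

Fixpoint pos (k : nat -> nat) (t : nat) : nat * nat :=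
  match t with
  | 0 => (0, 0)
  | S t' => let (n, o) := pos k t' in if o <? k n then (n, S o) else (S n, 0)
  end.

Lemma pos_inv k t : snd (pos k t) <= k (fst (pos k t)).
Proof.
  induction t as [|t IH]; simpl; [lia|]. destruct (pos k t) as [n o]; simpl in *.
  destruct (o <? k n) eqn:He; simpl; [apply Nat.ltb_lt in He; lia| lia].
Qed.

Lemma pos_mono k t d : fst (pos k t) <= fst (pos k (t + d)).
Proof.
  induction d as [|d IH]; [rewrite Nat.add_0_r; lia|].
  rewrite Nat.add_succ_r; simpl. destruct (pos k (t + d)) as [n o]; simpl in *.
  destruct (o <? k n); simpl; lia.
Qed.

Lemma pos_run k t n : pos k t = (n, 0) -> forall d, d <= k n -> pos k (t + d) = (n, d).
Proof.
  intros Ht d. induction d as [|d IH]; intros Hd; [rewrite Nat.add_0_r; auto|].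
  rewrite Nat.add_succ_r; simpl. rewrite IH by lia.
  destruct (d <? k n) eqn:He; auto. apply Nat.ltb_ge in He; lia.
Qed.

Lemma pos_next k t n : pos k t = (n, 0) -> pos k (t + S (k n)) = (S n, 0).
Proof.
  intros Ht. rewrite Nat.add_succ_r; simpl. rewrite (pos_run k t n Ht (k n)) by lia.
  rewrite Nat.ltb_irrefl; auto.
Qed.

Lemma pos_reach k n : exists t, pos k t = (n, 0).
Proof.
  induction n as [|n [t Ht]]; [exists 0; auto|]. exists (t + S (k n)); apply pos_next; auto.
Qed.

Section Main.
Variable V : Type.
Variable E : V -> V -> Prop.

Definition Rin (C : V -> Prop) : V -> V -> Prop := fun a b => E a b /\ C a /\ C b.
Definition crt C := clos_refl_trans V (Rin C).
Definition SC := strongly_connected E.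
Definition FF := digraph_F E.

Lemma crt_mono C C' x y : subset C C' -> crt C x y -> crt C' x y.
Proof.
  intros HS H; induction H.
  - apply rt_step; destruct H as [? [? ?]]; repeat split; auto.
  - apply rt_refl.
  - eapply rt_trans; eauto.
Qed.

Lemma hub_SC C h : C h -> (forall z, C z -> crt C h z /\ crt C z h) -> SC C.
Proof.
  intros Ch H x y Cx Cy. destruct (H x Cx) as [_ H1]. destruct (H y Cy) as [H2 _].
  change (crt C x y). eapply rt_trans; eauto.
Qed.

Definition crtl (l : list V) := crt (fun z => In z l).

Lemma walkset C x y : clos_refl_trans V (Rin C) x y -> C y ->
  exists l, (forall z, In z l -> C z) /\ In x l /\ In y l /\
    forall z, In z l -> crtl l x z /\ crtl l z y.
Proof.
  intros H Cy. apply clos_rt_rt1n in H. induction H as [x|x x' y H H0 IHclos_refl_trans_1n].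
  - exists [x]. split; [intros z [<-|[]]; auto|]. split; [left; auto|]. split; [left;auto|].
    intros z [<-|[]]; split; apply rt_refl.
  - destruct H as [Exy [Cx Cy']]. destruct (IHclos_refl_trans_1n Cy) as [l [H1 [H2 [H3 H4]]]].
    exists (x :: l). split; [intros z [<-|Hz]; auto|]. split; [left; auto|]. split; [right; auto|].
    assert (Hm : forall a b, crtl l a b -> crtl (x :: l) a b).
    { intros a b; apply crt_mono. intros u Hu; right; auto. }
    assert (Hxy : crtl (x::l) x y).
    { eapply rt_trans. apply rt_step. split; [exact Exy|]. split; [left; auto| right; auto].
      apply Hm. apply H4; auto. }
    intros z [<-|Hz].
    + split; [apply rt_refl|]. eapply rt_trans. apply rt_step. split; [exact Exy|]. split; [left; auto| right; auto].
      apply Hm. apply H4; auto.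
    + split.
      * eapply rt_trans. apply rt_step. split; [exact Exy|]. split; [left; auto| right; auto].
        apply Hm. apply H4; auto.
      * apply Hm; apply H4; auto.
Qed.

Lemma SC_single x : SC (fun z => z = x).
Proof. intros a b -> ->. apply rt_refl. Qed.

Lemma SC_union A B : SC A -> SC B -> (exists x, A x /\ B x) ->
  SC (fun z => A z \/ B z).
Proof.
  intros HA HB [x [Ax Bx]].
  assert (hA : forall a b, A a -> A b -> crt (fun z => A z \/ B z) a b).
  { intros a b Ha Hb. eapply crt_mono; [|apply HA; auto]. intros u; auto. }
  assert (hB : forall a b, B a -> B b -> crt (fun z => A z \/ B z) a b).
  { intros a b Ha Hb. eapply crt_mono; [|apply HB; auto]. intros u; auto. }
  apply hub_SC with x; [left; auto|]. intros z [Hz|Hz]; split; auto.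
Qed.

Lemma conn_SC C : connected FF C <-> SC C.
Proof.
  split.
  - intros H x y Cx Cy. destruct (H x y Cx Cy) as [A [[_ HA] [HS [Ax Ay]]]].
    change (crt C x y). eapply crt_mono; [exact HS|]. apply HA; auto.
  - intros H x y Cx Cy.
    destruct (walkset C x y (H x y Cx Cy) Cy) as [l1 [A1 [B1 [C1 D1]]]].
    destruct (walkset C y x (H y x Cy Cx) Cx) as [l2 [A2 [B2 [C2 D2]]]].
    exists (fun z => In z (l1 ++ l2)). split; [split|].
    + exists (l1 ++ l2); auto.
    + assert (M1 : forall a b, crtl l1 a b -> crt (fun z => In z (l1 ++ l2)) a b).
      { intros a b; apply crt_mono; intros u Hu; apply in_or_app; auto. }
      assert (M2 : forall a b, crtl l2 a b -> crt (fun z => In z (l1 ++ l2)) a b).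
      { intros a b; apply crt_mono; intros u Hu; apply in_or_app; auto. }
      apply hub_SC with x; [apply in_or_app; auto|].
      intros z Hz; apply in_app_or in Hz; destruct Hz as [Hz|Hz].
      * split; [apply M1, D1; auto|]. eapply rt_trans; [apply M1, D1; auto|]. apply M2, D2; auto.
      * split; [|apply M2, D2; auto]. eapply rt_trans; [apply M1, D1; auto|]. apply M2, D2; auto.
    + split; [intros z Hz; apply in_app_or in Hz; destruct Hz; auto|].
      split; apply in_or_app; auto.
Qed.

Definition scomp (S' K : V -> Prop) : Prop :=
  subset K S' /\ SC K /\ (forall C', subset K C' -> subset C' S' -> SC C' -> subset C' K).

Lemma is_comp_iff S' K : is_comp FF S' K <-> scomp S' K.
Proof.
  unfold is_comp, scomp. split; intros [H1 [H2 H3]]; split; auto; split.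
  - apply conn_SC; auto.
  - intros C' a b c; apply H3; auto; apply conn_SC; auto.
  - apply conn_SC; auto.
  - intros C' a b c; apply H3; auto; apply conn_SC; auto.
Qed.

Lemma strong_comp_iff A K : strong_comp E A K <-> scomp (compl A) K.
Proof. reflexivity. Qed.

Lemma scomp_absorb S' K C : scomp S' K -> SC C -> subset C S' -> (exists x, C x /\ K x) ->
  subset C K.
Proof.
  intros [H1 [H2 H3]] HC HCS [x [Cx Kx]].
  assert (Hs : subset (fun z => K z \/ C z) K).
  { apply H3. intros u; auto. intros u [Hu|Hu]; auto. apply SC_union; eauto. }
  intros u Hu; apply Hs; auto.
Qed.

Lemma scomp_sub S' K1 K2 : scomp S' K1 -> scomp S' K2 -> (exists x, K1 x /\ K2 x) -> subset K1 K2.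
Proof.
  intros H1 H2 [x [a b]]. eapply scomp_absorb; eauto. apply H1. apply H1.
Qed.

Lemma scomp_exists S' x : S' x -> exists K, scomp S' K /\ K x.
Proof.
  intros Sx. exists (fun y => exists C, SC C /\ subset C S' /\ C x /\ C y).
  split; [split; [|split]|].
  - intros y [C [_ [HS [_ Cy]]]]; auto.
  - intros y z [C1 [S1 [T1 [X1 Y1]]]] [C2 [S2 [T2 [X2 Y2]]]].
    assert (HU : SC (fun u => C1 u \/ C2 u)) by (apply SC_union; eauto).
    eapply crt_mono; [|apply HU; auto].
    intros u [Hu|Hu]; [exists C1|exists C2]; auto.
  - intros C' HK HCS HC' y Hy. exists C'. split; auto. split; auto. split; auto.
    apply HK. exists (fun z => z = x). split; [apply SC_single|]. split; [intros u ->; auto|]. auto.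
  - exists (fun z => z = x). split; [apply SC_single|]. split; [intros u ->; auto|]. auto.
Qed.


Lemma SC_ext A B : (forall z, A z <-> B z) -> SC A -> SC B.
Proof.
  intros He H x y Bx By. change (crt B x y). eapply crt_mono; [|apply H; apply He; auto].
  intros u; apply He.
Qed.

Lemma finite_ext (A B : V -> Prop) : subset B A -> finite A -> finite B.
Proof. intros HS [l Hl]; exists l; auto. Qed.

Lemma finite_union (A B : V -> Prop) : finite A -> finite B -> finite (fun z => A z \/ B z).
Proof. intros [l1 H1] [l2 H2]; exists (l1 ++ l2); intros x [Hx|Hx]; apply in_or_app; auto. Qed.

Definition NK (H : nat -> V -> Prop) : Prop :=
  (forall n, finite (H n) /\ SC (H n)) /\
  (forall i j, (exists x, H i x /\ H j x) <-> (i <= j + 1 /\ j <= i + 1)).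

Lemma necklace_unfold N : necklace FF N -> exists H, NK H /\ (forall x, N x <-> exists n, H n x).
Proof.
  intros [_ [H [H1 [H2 H3]]]]. exists H. split; auto. split; auto.
  intros n; destruct (H1 n); split; auto; apply conn_SC; auto.
Qed.

Lemma nbound H : NK H -> forall l, exists J, forall x j, In x l -> H j x -> j <= J.
Proof.
  intros [_ HI]. induction l as [|a l IH].
  - exists 0; intros x j [].
  - destruct IH as [J HJ]. destruct (classic (exists j0, H j0 a)) as [[j0 Hj0]|Hn].
    + exists (max J (j0 + 1)). intros x j [<-|Hx] Hj.
      * assert (j <= j0 + 1 /\ j0 <= j + 1) by (apply HI; eauto). lia.
      * specialize (HJ x j Hx Hj). lia.
    + exists J. intros x j [<-|Hx] Hj; [exfalso; eauto| eauto].
Qed.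

Lemma NK_nonempty H : NK H -> forall n, exists x, H n x.
Proof. intros [_ HI] n. destruct (proj2 (HI n n)) as [x [Hx _]]; [lia|eauto]. Qed.

Definition chain (H : nat -> V -> Prop) i j := fun y => exists k, i <= k <= j /\ H k y.

Lemma chain_prop H : (forall n, finite (H n) /\ SC (H n)) -> (forall n, exists x, H n x /\ H (S n) x) ->
  forall i d, finite (chain H i (i + d)) /\ SC (chain H i (i + d)).
Proof.
  intros H1 H2 i d. induction d as [|d [IHf IHs]].
  - split.
    + eapply finite_ext; [|apply (H1 i)]. intros y [k [Hk Hy]]. replace i with k by lia. auto.
    + eapply SC_ext; [|apply (H1 i)]. intros z; split.
      * intros Hz; exists i; split; auto; lia.
      * intros [k [Hk Hy]]. replace i with k by lia. auto.
  - assert (Heq : forall z, (chain H i (i + d) z \/ H (i + S d) z) <-> chain H i (i + S d) z).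
    { intros z; split.
      - intros [[k [Hk Hz]]|Hz]; [exists k; split; auto; lia| exists (i + S d); split; auto; lia].
      - intros [k [Hk Hz]]. destruct (Nat.eq_dec k (i + S d)) as [->|Hne]; auto.
        left; exists k; split; auto; lia. }
    split.
    + eapply finite_ext; [|apply finite_union; [exact IHf|apply (H1 (i + S d))]].
      intros z Hz; apply Heq; auto.
    + eapply SC_ext; [exact Heq|]. apply SC_union; auto. apply H1.
      destruct (H2 (i + d)) as [x [Ha Hb]]. exists x. split.
      * exists (i + d); split; auto; lia.
      * replace (i + S d) with (S (i + d)) by lia; auto.
Qed.

Lemma NK_consec H : NK H -> forall n, exists x, H n x /\ H (S n) x.
Proof. intros [_ HI] n. apply HI. lia. Qed.

Lemma NK_necklace H : NK H -> necklace FF (fun x => exists n, H n x).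
Proof.
  intros HN. split.
  - apply conn_SC. intros x y [i Hi] [j Hj].
    pose proof (chain_prop H (proj1 HN) (NK_consec H HN) 0 (i + j)) as [_ HS].
    change (crt (fun x => exists n, H n x) x y). eapply crt_mono; [|apply HS].
    + intros u [k [_ Hk]]; eauto.
    + exists i; split; auto; lia.
    + exists j; split; auto; lia.
  - exists H. split; [|split; [intros; reflexivity|apply HN]].
    intros n; split; [apply HN|]. apply conn_SC; apply HN.
Qed.

Lemma tail_exists H N X : NK H -> (forall x, N x <-> exists n, H n x) -> finite X ->
  exists T, is_tail FF X N T.
Proof.
  intros HN HNc [lX HX]. destruct (nbound H HN lX) as [J HJ].
  destruct (NK_nonempty H HN (S J)) as [x0 Hx0].
  assert (Sx0 : setminus N X x0).
  { split; [apply HNc; eauto|]. intros Xx. specialize (HJ x0 (S J) (HX _ Xx) Hx0). lia. }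
  destruct (scomp_exists _ x0 Sx0) as [K [HK Kx0]].
  exists K. split; [apply is_comp_iff; auto|].
  destruct (chain_prop H (proj1 HN) (NK_consec H HN) 0 J) as [[lc Hlc] _].
  exists lc. intros y [Ny nKy]. apply Hlc. destruct (proj1 (HNc y) Ny) as [j Hj].
  destruct (le_lt_dec j J) as [Hle|Hlt]; [exists j; split; auto; lia|].
  exfalso; apply nKy.
  destruct (chain_prop H (proj1 HN) (NK_consec H HN) (S J) (j - S J)) as [_ HS].
  replace (S J + (j - S J)) with j in HS by lia.
  apply (scomp_absorb (setminus N X) K _ HK HS).
  - intros u [k [Hk Hu]]. split; [apply HNc; eauto|]. intros Xu. specialize (HJ u k (HX _ Xu) Hu). lia.
  - exists x0. split; auto. exists (S J); split; auto; lia.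
  - exists j; split; auto; lia.
Qed.

Lemma N_infinite H N Y : NK H -> (forall x, N x <-> exists n, H n x) -> finite Y ->
  exists x, N x /\ ~ Y x.
Proof.
  intros HN HNc [l Hl]. destruct (nbound H HN l) as [J HJ].
  destruct (NK_nonempty H HN (S J)) as [x Hx]. exists x. split; [apply HNc; eauto|].
  intros Yx. specialize (HJ x (S J) (Hl _ Yx) Hx). lia.
Qed.

Lemma ray_avoid r : directed_ray E r -> forall l : list V, exists n, forall m, n <= m -> ~ In (r m) l.
Proof.
  intros [Hinj _] l. induction l as [|a l [n Hn]].
  - exists 0; intros m _ [].
  - destruct (classic (exists k, r k = a)) as [[k Hk]|Hno].
    + exists (max n (S k)). intros m Hm [Ha|Hi].
      * rewrite <- Hk in Ha. apply Hinj in Ha. lia.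
      * apply (Hn m); auto; lia.
    + exists n. intros m Hm [Ha|Hi]; [apply Hno; eauto| apply (Hn m); auto].
Qed.

Lemma link r H N : directed_ray E r -> NK H -> (forall x, N x <-> exists n, H n x) ->
  (exists n0, forall m, n0 <= m -> N (r m)) ->
  forall X, finite X -> exists K, strong_comp E X K /\ has_tail_in r K /\ tail_in FF X N K.
Proof.
  intros Hr HN HNc [n0 Hn0] X HX.
  destruct (tail_exists H N X HN HNc HX) as [T [HT [lT HlT]]].
  destruct HX as [lX HlX].
  destruct (ray_avoid r Hr (lT ++ lX)) as [n1 Hn1].
  set (M := max n0 n1).
  assert (Hm : forall m, M <= m -> T (r m) /\ ~ X (r m)).
  { intros m Hm. split.
    - destruct (classic (T (r m))) as [|Hn]; auto. exfalso. apply (Hn1 m); [lia|].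
      apply in_or_app; left. apply HlT. split; auto. apply Hn0; lia.
    - intros Xr. apply (Hn1 m); [lia|]. apply in_or_app; right; auto. }
  destruct (Hm M (le_n _)) as [TM XM].
  destruct (scomp_exists (compl X) (r M) XM) as [K [HK KM]].
  apply is_comp_iff in HT.
  assert (TK : subset T K).
  { apply (scomp_absorb (compl X) K T HK (proj1 (proj2 HT))).
    - intros u Hu; apply (proj1 HT) in Hu; apply Hu.
    - exists (r M); auto. }
  exists K. split; auto. split.
  - exists M; intros m Hm'; apply TK, Hm; auto.
  - exists T. split; auto. split; [apply is_comp_iff; auto| exists lT; auto].
Qed.


Lemma loop_erase (w : nat -> V) : (forall t, E (w t) (w (S t)) \/ w t = w (S t)) ->
  (forall v, exists T, forall t, T <= t -> w t <> v) ->
  exists r, directed_ray E r /\ forall k, exists t, r k = w t.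
Proof.
  intros Hs Hf.
  assert (Hlast : forall t, exists s, t <= s /\ w s = w t /\ forall s', s < s' -> w s' <> w t).
  { intros t. destruct (Hf (w t)) as [T HT].
    destruct (maxocc (fun s => t <= s /\ w s = w t) t T) as [s [[H1 H2] H3]].
    - split; auto.
    - intros s [_ Hs2]. destruct (le_lt_dec T s) as [Hle|]; auto. exfalso; apply (HT s Hle Hs2).
    - exists s; split; auto; split; auto. intros s' Hs3 He.
      specialize (H3 s' (conj (Nat.le_trans _ _ _ H1 (Nat.lt_le_incl _ _ Hs3)) He)). lia. }
  set (lastf := fun t => proj1_sig (constructive_indefinite_description _ (Hlast t))).
  assert (Hl : forall t, t <= lastf t /\ w (lastf t) = w t /\ forall s', lastf t < s' -> w s' <> w t).
  { intros t; unfold lastf; destruct (constructive_indefinite_description _ (Hlast t)); auto. }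
  set (tt := fix tt k := match k with 0 => lastf 0 | S k => lastf (S (tt k)) end).
  assert (Hkey : forall k s', tt k < s' -> w s' <> w (tt k)).
  { intros [|k] s' Hs4; simpl.
    - destruct (Hl 0) as [_ [H2 H3]]. rewrite H2. apply H3; auto.
    - destruct (Hl (S (tt k))) as [_ [H2 H3]]. rewrite H2. apply H3; auto. }
  assert (Hinc : forall k, tt k < tt (S k)).
  { intros k; simpl. destruct (Hl (S (tt k))) as [H1 _]. lia. }
  assert (Hinc2 : forall i j, i < j -> tt i < tt j).
  { intros i j Hij. induction Hij; [apply Hinc|]. specialize (Hinc m); lia. }
  exists (fun k => w (tt k)). split; [split|].
  - intros i j He. destruct (lt_eq_lt_dec i j) as [[Hlt|]|Hlt]; auto; exfalso.
    + apply (Hkey i (tt j)); auto.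
    + apply (Hkey j (tt i)); auto.
  - intros k. assert (Heq : w (tt (S k)) = w (S (tt k))).
    { simpl. apply Hl. }
    rewrite Heq. destruct (Hs (tt k)) as [He|He]; auto. exfalso.
    apply (Hkey k (S (tt k))); auto.
  - intros k; eauto.
Qed.


Lemma pathfun C x y : clos_refl_trans V (Rin C) x y -> C y ->
  exists p : nat * (nat -> V), snd p 0 = x /\ snd p (fst p) = y /\
    (forall i, i < fst p -> E (snd p i) (snd p (S i))) /\ (forall i, i <= fst p -> C (snd p i)).
Proof.
  intros H Cy. apply clos_rt_rt1n in H. induction H as [x|x x' y Hr H IH].
  - exists (0, fun _ => x); simpl. repeat split; auto. intros; lia.
  - destruct (IH Cy) as [[k f] [H1 [H2 [H3 H4]]]]; simpl in *.
    destruct Hr as [Exx [Cx Cx']].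
    exists (S k, fun i => match i with 0 => x | S i => f i end); simpl.
    repeat split; auto.
    + intros [|i] Hi; simpl; [rewrite H1; auto|]. apply H3; lia.
    + intros [|i] Hi; auto. apply H4; lia.
Qed.


Lemma necklace_to_ray H N : NK H -> (forall x, N x <-> exists n, H n x) ->
  exists r, directed_ray E r /\ forall m, N (r m).
Proof.
  intros HN HNc.
  set (xs := fun n => proj1_sig (constructive_indefinite_description _ (NK_consec H HN n))).
  assert (Hxs : forall n, H n (xs n) /\ H (S n) (xs n)).
  { intros n; unfold xs; destruct (constructive_indefinite_description _ _); auto. }
  assert (Hp : forall n, exists p : nat * (nat -> V), snd p 0 = xs n /\ snd p (fst p) = xs (S n) /\
    (forall i, i < fst p -> E (snd p i) (snd p (S i))) /\ (forall i, i <= fst p -> H (S n) (snd p i))).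
  { intros n. apply pathfun; [|apply Hxs].
    apply (proj2 (proj1 HN (S n))); [apply Hxs| apply Hxs]. }
  set (pp := fun n => proj1_sig (constructive_indefinite_description _ (Hp n))).
  assert (Hpp : forall n, snd (pp n) 0 = xs n /\ snd (pp n) (fst (pp n)) = xs (S n) /\
    (forall i, i < fst (pp n) -> E (snd (pp n) i) (snd (pp n) (S i))) /\
    (forall i, i <= fst (pp n) -> H (S n) (snd (pp n) i))).
  { intros n; unfold pp; destruct (constructive_indefinite_description _ _); auto. }
  set (k := fun n => fst (pp n)).
  set (w := fun t => snd (pp (fst (pos k t))) (snd (pos k t))).
  assert (Hin : forall t, H (S (fst (pos k t))) (w t)).
  { intros t. unfold w. apply Hpp. apply (pos_inv k t). }
  destruct (loop_erase w) as [r [Hr Hrw]].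
  - intros t. unfold w. simpl. pose proof (pos_inv k t) as Hi.
    destruct (pos k t) as [n o]; simpl in *.
    destruct (o <? k n) eqn:He; simpl.
    + left. apply Nat.ltb_lt in He. apply Hpp; auto.
    + right. apply Nat.ltb_ge in He. assert (o = k n) by lia. subst o.
      destruct (Hpp n) as [_ [H2 _]]. destruct (Hpp (S n)) as [H1 _].
      unfold k; rewrite H2, H1. auto.
  - intros v. destruct (classic (exists j0, H j0 v)) as [[j0 Hj0]|Hno].
    + destruct (pos_reach k (S j0)) as [t0 Ht0]. exists t0. intros t Ht Hwv.
      pose proof (pos_mono k t0 (t - t0)) as Hm. replace (t0 + (t - t0)) with t in Hm by lia.
      rewrite Ht0 in Hm; simpl in Hm.
      pose proof (Hin t) as Hh. rewrite Hwv in Hh.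
      assert (S (fst (pos k t)) <= j0 + 1 /\ j0 <= S (fst (pos k t)) + 1) by (apply HN; eauto).
      lia.
    + exists 0. intros t _ Hwv. apply Hno. exists (S (fst (pos k t))). rewrite <- Hwv. apply Hin.
  - exists r. split; auto. intros m. destruct (Hrw m) as [t ->]. apply HNc. eauto.
Qed.

Definition seg (r : nat -> V) a a' := map r (seq a (S (a' - a))).

Lemma in_seg r a a' y : a <= a' -> (In y (seg r a a') <-> exists m, a <= m <= a' /\ r m = y).
Proof.
  intros Ha. unfold seg. rewrite in_map_iff. split.
  - intros [m [Hm Hi]]. apply in_seq in Hi. exists m; split; auto; lia.
  - intros [m [Hm Hi]]. exists m; split; auto. apply in_seq; lia.
Qed.

Record st := mkst { sa : nat; sU2 : list V; sU1 : list V }.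

Definition Inv (r : nat -> V) (s : st) : Prop :=
  exists K, strong_comp E (fun x => In x (sU2 s)) K /\ forall m, sa s <= m -> K (r m).

Definition Good (r : nat -> V) (s : st) (c : nat * list V) : Prop :=
  sa s < fst c /\
  (exists K, strong_comp E (fun x => In x (sU1 s)) K /\ forall m, fst c <= m -> K (r m)) /\
  (exists K, strong_comp E (fun x => In x (sU2 s)) K /\ (forall m, sa s <= m -> K (r m)) /\
     forall z, In z (snd c) -> K z) /\
  (forall z, In z (snd c) -> crtl (snd c) (r (fst c)) z /\ crtl (snd c) z (r (sa s))) /\
  In (r (fst c)) (snd c) /\ In (r (sa s)) (snd c).

Definition chs r s : nat * list V := epsilon (inhabits (0, @nil V)) (Good r s).
Definition Hl r s := seg r (sa s) (fst (chs r s)) ++ snd (chs r s).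
Definition nxt r s : st := mkst (fst (chs r s)) (sU1 s) (sU1 s ++ Hl r s).
Fixpoint stq r a0 n : st := match n with 0 => mkst a0 nil nil | S n => nxt r (stq r a0 n) end.

Lemma good_exists r s : solid E r -> Inv r s -> exists c, Good r s c.
Proof.
  intros [Hr Hsol] [K [HK HKr]].
  destruct (Hsol (fun x => In x (sU1 s))) as [K' [HK' [n Hn]]]; [exists (sU1 s); auto|].
  set (a' := max n (S (sa s))).
  assert (Hb1 : n <= a') by (unfold a'; lia). assert (Hb2 : S (sa s) <= a') by (unfold a'; lia).
  clearbody a'.
  assert (Ha' : K (r a')) by (apply HKr; lia).
  assert (Ha : K (r (sa s))) by (apply HKr; lia).
  destruct (walkset K (r a') (r (sa s)) (proj1 (proj2 HK) _ _ Ha' Ha) Ha) as [l [H1 [H2 [H3 H4]]]].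
  exists (a', l). unfold Good; simpl. split; [lia|]. split.
  - exists K'. split; auto. intros m Hm; apply Hn; lia.
  - split; [exists K; auto|]. split; auto.
Qed.

Lemma stq_good r a0 : solid E r -> Inv r (mkst a0 nil nil) ->
  forall j, Inv r (stq r a0 j) /\ Good r (stq r a0 j) (chs r (stq r a0 j)).
Proof.
  intros Hs H0. induction j as [|j IH].
  - split; auto. unfold chs. apply epsilon_spec. apply good_exists; auto.
  - assert (HI : Inv r (stq r a0 (S j))).
    { destruct IH as [_ [_ [[K [HK HKr]] _]]]. exists K. split; auto. }
    split; auto. unfold chs. apply epsilon_spec. apply good_exists; auto.
Qed.

Lemma ray_crt r C a b : (forall m, a <= m < b -> E (r m) (r (S m))) ->
  (forall m, a <= m <= b -> C (r m)) -> a <= b -> crt C (r a) (r b).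
Proof.
  intros HE HC Hab. induction Hab as [|b Hab IH].
  - apply rt_refl.
  - eapply rt_trans; [apply IH; intros; [apply HE|apply HC]; lia|].
    apply rt_step. split; [apply HE; lia|]. split; apply HC; lia.
Qed.

Lemma ray_to_necklace r : solid E r ->
  exists H, NK H /\ exists n0, forall m, n0 <= m -> exists n, H n (r m).
Proof.
  intros Hs. pose proof Hs as [[Hinj HE] Hsol].
  assert (Ex0 : exists a0, Inv r (mkst a0 nil nil)).
  { destruct (Hsol (fun x => In x nil)) as [K [HK [n Hn]]]; [exists nil; auto|].
    exists n. exists K; split; auto. }
  set (a0 := epsilon (inhabits 0) (fun a => Inv r (mkst a nil nil))).
  assert (H0 : Inv r (mkst a0 nil nil)) by (apply epsilon_spec; auto).
  set (q := stq r a0).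
  assert (HG : forall j, Inv r (q j) /\ Good r (q j) (chs r (q j))) by (apply stq_good; auto).
  set (HH := fun j y => In y (Hl r (q j))).
  assert (Hsa : forall j, sa (q (S j)) = fst (chs r (q j))) by reflexivity.
  assert (HU2 : forall j, sU2 (q (S j)) = sU1 (q j)) by reflexivity.
  assert (HU1 : forall j, sU1 (q (S j)) = sU1 (q j) ++ Hl r (q j)) by reflexivity.
  assert (Hinc : forall j, sa (q j) < sa (q (S j))).
  { intros j. rewrite Hsa. apply HG. }
  assert (Hseg : forall j m, sa (q j) <= m <= sa (q (S j)) -> HH j (r m)).
  { intros j m Hm. unfold HH, Hl. apply in_or_app; left. rewrite <- Hsa.
    apply in_seg; [lia|]. eauto. }
  assert (HinK : forall j, exists K, strong_comp E (fun x => In x (sU2 (q j))) K /\ subset (HH j) K).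
  { intros j. destruct (HG j) as [_ [_ [_ [[K [HK [HKr HKl]]] _]]]].
    exists K. split; auto. intros y Hy. unfold HH, Hl in Hy. apply in_app_or in Hy.
    destruct Hy as [Hy|Hy]; auto. apply in_seg in Hy; [|rewrite <- Hsa; specialize (Hinc j); lia].
    destruct Hy as [m [Hm <-]]. apply HKr; lia. }
  assert (HU1mono : forall p d x, In x (sU1 (q p)) -> In x (sU1 (q (p + d)))).
  { intros p d x Hx. induction d as [|d IH]; [rewrite Nat.add_0_r; auto|].
    rewrite Nat.add_succ_r, HU1. apply in_or_app; auto. }
  assert (Hdisj : forall i j x, i + 2 <= j -> HH i x -> HH j x -> False).
  { intros i j x Hij Hi Hj. destruct (HinK j) as [K [[HKs _] HS]].
    apply (HKs x (HS x Hj)). destruct j as [|j]; [lia|]. rewrite HU2.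
    replace j with (S i + (j - S i)) by lia. apply HU1mono. rewrite HU1. apply in_or_app; auto. }
  exists HH. split; [split|].
  - intros n. split; [exists (Hl r (q n)); auto|].
    destruct (HG n) as [_ [Hlt [_ [_ [Hl1 [Hl2 Hl3]]]]]].
    set (a := sa (q n)) in *. set (a' := fst (chs r (q n))) in *.
    assert (Hray : forall m m', a <= m <= m' -> m' <= a' -> crt (HH n) (r m) (r m')).
    { intros m m' Hm Hm'. apply ray_crt; [intros; apply HE| |lia].
      intros p Hp. apply Hseg; rewrite Hsa; fold a'; lia. }
    assert (Hlm : forall u v, crtl (snd (chs r (q n))) u v -> crt (HH n) u v).
    { intros u v; apply crt_mono. intros y Hy; unfold HH, Hl; apply in_or_app; auto. }
    apply hub_SC with (r a); [apply Hseg; rewrite Hsa; fold a'; lia|].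
    intros z Hz. unfold HH, Hl in Hz. apply in_app_or in Hz. destruct Hz as [Hz|Hz].
    + apply in_seg in Hz; [|fold a a'; lia]. destruct Hz as [m [Hm <-]]. split.
      * apply Hray; lia.
      * eapply rt_trans; [apply (Hray m a'); lia|]. apply Hlm, Hl1; auto.
    + split.
      * eapply rt_trans; [apply (Hray a a'); lia|]. apply Hlm, Hl1; auto.
      * apply Hlm, Hl1; auto.
  - intros i j. split.
    + intros [x [Hi Hj]]. split.
      * destruct (le_lt_dec i (j + 1)) as [|Hlt]; auto. exfalso; apply (Hdisj j i x); auto; lia.
      * destruct (le_lt_dec j (i + 1)) as [|Hlt]; auto. exfalso; apply (Hdisj i j x); auto; lia.
    + intros Hij. assert (Hc : forall n, HH n (r (sa (q (S n)))) /\ HH (S n) (r (sa (q (S n))))).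
      { intros n. pose proof (Hinc n). pose proof (Hinc (S n)). split; apply Hseg; lia. }
      destruct (lt_eq_lt_dec i j) as [[Hlt|<-]|Hlt].
      * replace j with (S i) by lia. exists (r (sa (q (S i)))); apply Hc.
      * exists (r (sa (q i))). specialize (Hinc i). split; apply Hseg; lia.
      * replace i with (S j) by lia. exists (r (sa (q (S j)))). split; apply Hc.
  - exists (sa (q 0)). intros m Hm.
    assert (Hge : forall j, j <= sa (q j)).
    { induction j as [|j IH]; [lia|]. specialize (Hinc j); lia. }
    assert (G : forall j m, sa (q 0) <= m <= sa (q j) -> exists n, HH n (r m)).
    { induction j as [|j IH]; intros m' Hm'.
      - exists 0. apply Hseg. specialize (Hinc 0). lia.
      - destruct (le_lt_dec m' (sa (q j))) as [Hle|Hlt]; [apply IH; lia|].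
        exists j. apply Hseg; lia. }
    apply (G m). specialize (Hge m). lia.
Qed.

Lemma has_tail_common (r : nat -> V) K1 K2 : has_tail_in r K1 -> has_tail_in r K2 -> exists x, K1 x /\ K2 x.
Proof. intros [n1 H1] [n2 H2]. exists (r (n1 + n2)). split; [apply H1|apply H2]; lia. Qed.

Lemma has_tail_sub (r : nat -> V) K1 K2 : has_tail_in r K1 -> subset K1 K2 -> has_tail_in r K2.
Proof. intros [n H] HS; exists n; auto. Qed.

Lemma tail_in_sub X N K1 K2 : tail_in FF X N K1 -> subset K1 K2 -> tail_in FF X N K2.
Proof. intros [T [HT HS]] HS'; exists T; split; auto; intros x Hx; auto. Qed.

Lemma tail_common N X K1 K2 : necklace FF N -> tail_in FF X N K1 -> tail_in FF X N K2 ->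
  exists x, K1 x /\ K2 x.
Proof.
  intros HN [T1 [[_ [l1 F1]] S1]] [T2 [[_ [l2 F2]] S2]].
  destruct (necklace_unfold N HN) as [H [HNK HNc]].
  destruct (N_infinite H N (fun x => In x (l1 ++ l2)) HNK HNc) as [x [Nx Hx]]; [exists (l1 ++ l2); auto|].
  exists x. split.
  - apply S1. destruct (classic (T1 x)) as [|Hn]; auto. exfalso; apply Hx, in_or_app; left; apply F1; split; auto.
  - apply S2. destruct (classic (T2 x)) as [|Hn]; auto. exfalso; apply Hx, in_or_app; right; apply F2; split; auto.
Qed.

Lemma tail_comp N X : necklace FF N -> finite X -> exists K, is_comp FF (compl X) K /\ tail_in FF X N K.
Proof.
  intros HN HX. destruct (necklace_unfold N HN) as [H [HNK HNc]].
  destruct (tail_exists H N X HNK HNc HX) as [T [HT [lT HlT]]].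
  destruct (N_infinite H N (fun x => In x lT) HNK HNc) as [x [Nx Hx]]; [exists lT; auto|].
  assert (Tx : T x) by (destruct (classic (T x)) as [|Hn]; auto; exfalso; apply Hx, HlT; split; auto).
  apply is_comp_iff in HT. destruct HT as [HTs [HTc HTm]].
  assert (Xx : compl X x) by (apply HTs in Tx; apply Tx).
  destruct (scomp_exists (compl X) x Xx) as [K [HK Kx]].
  exists K. split; [apply is_comp_iff; auto|].
  exists T. split; [split; [apply is_comp_iff; split; auto| exists lT; auto]|].
  apply (scomp_absorb (compl X) K T HK HTc); [intros u Hu; apply HTs in Hu; apply Hu|eauto].
Qed.

Lemma neq_refl N : necklace FF N -> necklace_equiv FF N N.
Proof. intros HN X HX. destruct (tail_comp N X HN HX) as [K [HK HT]]. eauto. Qed.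

Lemma neq_sym N1 N2 : necklace_equiv FF N1 N2 -> necklace_equiv FF N2 N1.
Proof. intros H X HX. destruct (H X HX) as [K [a [b c]]]; eauto. Qed.

Lemma neq_trans N1 N2 N3 : necklace FF N2 -> necklace_equiv FF N1 N2 -> necklace_equiv FF N2 N3 ->
  necklace_equiv FF N1 N3.
Proof.
  intros HN H12 H23 X HX. destruct (H12 X HX) as [K1 [C1 [T1 T2]]].
  destruct (H23 X HX) as [K2 [C2 [T2' T3]]].
  assert (S21 : subset K2 K1).
  { apply is_comp_iff in C1; apply is_comp_iff in C2. apply (scomp_sub (compl X)); auto.
    destruct (tail_common N2 X K2 K1 HN T2' T2) as [x [a b]]; eauto. }
  exists K1. split; auto. split; auto. eapply tail_in_sub; eauto.
Qed.

Lemma req_refl r : solid E r -> ray_equiv E r r.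
Proof. intros [_ Hs] A HA. destruct (Hs A HA) as [K [a b]]; eauto. Qed.

Lemma req_sym r1 r2 : ray_equiv E r1 r2 -> ray_equiv E r2 r1.
Proof. intros H A HA. destruct (H A HA) as [K [a [b c]]]; eauto. Qed.

Lemma req_trans r1 r2 r3 : ray_equiv E r1 r2 -> ray_equiv E r2 r3 -> ray_equiv E r1 r3.
Proof.
  intros H12 H23 A HA. destruct (H12 A HA) as [K1 [C1 [T1 T2]]].
  destruct (H23 A HA) as [K2 [C2 [T2' T3]]].
  assert (S21 : subset K2 K1).
  { apply (scomp_sub (compl A)); auto. apply (has_tail_common r2); auto. }
  exists K1. split; auto. split; auto. eapply has_tail_sub; eauto.
Qed.

Lemma dK_rep (w : dend E) r X K : finite X -> solid E r ->
  proj1_sig w = (fun r' => solid E r' /\ ray_equiv E r r') ->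
  (dK E X w K <-> strong_comp E X K /\ has_tail_in r K).
Proof.
  intros HX Hs Hw. unfold dK. rewrite Hw. split.
  - intros [HK Ht]. split; auto. apply Ht. split; auto. apply req_refl; auto.
  - intros [HK Ht]. split; auto. intros r' [Hs' Heq].
    destruct (Heq X HX) as [K' [HK' [T1 T2]]].
    eapply has_tail_sub; [exact T2|]. apply (scomp_sub (compl X)); auto.
    apply (has_tail_common r); auto.
Qed.

Lemma cK_rep (w : cend FF) N X K : finite X -> necklace FF N ->
  proj1_sig w = (fun N' => necklace FF N' /\ necklace_equiv FF N N') ->
  (cK FF X w K <-> is_comp FF (compl X) K /\ tail_in FF X N K).
Proof.
  intros HX HN Hw. unfold cK. rewrite Hw. split.
  - intros [HK Ht]. split; auto. apply Ht. split; auto. apply neq_refl; auto.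
  - intros [HK Ht]. split; auto. intros N' [HN' Heq].
    destruct (Heq X HX) as [K' [HK' [T1 T2]]].
    eapply tail_in_sub; [exact T2|]. apply is_comp_iff in HK; apply is_comp_iff in HK'.
    apply (scomp_sub (compl X)); auto. apply (tail_common N X); auto.
Qed.

Lemma link_P r N : necklace FF N ->
  (forall X, finite X -> exists K, strong_comp E X K /\ has_tail_in r K /\ tail_in FF X N K) ->
  forall X K, finite X ->
  (strong_comp E X K /\ has_tail_in r K <-> is_comp FF (compl X) K /\ tail_in FF X N K).
Proof.
  intros HN HL X K HX. destruct (HL X HX) as [K0 [C0 [R0 T0]]]. split.
  - intros [HK Ht]. split; [apply is_comp_iff; auto|]. eapply tail_in_sub; [exact T0|].
    apply (scomp_sub (compl X)); auto. apply (has_tail_common r); auto.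
  - intros [HK Ht]. apply is_comp_iff in HK. split; auto. eapply has_tail_sub; [exact R0|].
    apply (scomp_sub (compl X)); auto. apply (tail_common N X); auto.
Qed.

Lemma link_solid r H N : directed_ray E r -> NK H -> (forall x, N x <-> exists n, H n x) ->
  (exists n0, forall m, n0 <= m -> N (r m)) -> solid E r.
Proof.
  intros Hr HN HNc Hn. split; auto. intros A HA.
  destruct (link r H N Hr HN HNc Hn A HA) as [K [a [b _]]]; eauto.
Qed.

Definition PP (w : dend E) (w' : cend FF) : Prop :=
  forall X K, finite X -> (dK E X w K <-> cK FF X w' K).

Lemma PP_a w : exists w', PP w w'.
Proof.
  destruct w as [w0 [r [Hs Hw]]] eqn:Ew.
  destruct (ray_to_necklace r Hs) as [H [HNK Hl]].
  set (N := fun x => exists n, H n x).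
  assert (HN : necklace FF N) by (apply NK_necklace; auto).
  assert (Hw' : is_cend FF (fun N' => necklace FF N' /\ necklace_equiv FF N N')) by (exists N; auto).
  exists (exist _ _ Hw'). intros X K HX.
  rewrite (dK_rep (exist _ w0 (ex_intro _ r (conj Hs Hw))) r X K HX Hs Hw).
  rewrite (cK_rep (exist _ _ Hw') N X K HX HN eq_refl).
  apply link_P; auto. intros X' HX'. apply (link r H N (proj1 Hs) HNK (fun x => iff_refl _)); auto.
Qed.

Lemma PP_b w' : exists w, PP w w'.
Proof.
  destruct w' as [w0 [N [HN Hw']]] eqn:Ew.
  destruct (necklace_unfold N HN) as [H [HNK HNc]].
  destruct (necklace_to_ray H N HNK HNc) as [r [Hr HrN]].
  assert (Hl : exists n0, forall m, n0 <= m -> N (r m)) by (exists 0; auto).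
  assert (Hs : solid E r) by (apply (link_solid r H N); auto).
  assert (Hw : is_dend E (fun r' => solid E r' /\ ray_equiv E r r')) by (exists r; auto).
  exists (exist _ _ Hw). intros X K HX.
  rewrite (dK_rep (exist _ _ Hw) r X K HX Hs eq_refl).
  rewrite (cK_rep (exist _ w0 (ex_intro _ N (conj HN Hw'))) N X K HX HN Hw').
  apply link_P; auto. intros X' HX'. apply (link r H N Hr HNK HNc Hl); auto.
Qed.

Lemma dK_exists (w : dend E) X : finite X -> exists K, dK E X w K.
Proof.
  intros HX. destruct w as [w0 [r [Hs Hw]]] eqn:Ew.
  destruct Hs as [Hr Hsol] eqn:Es. destruct (Hsol X HX) as [K [HK Ht]].
  exists K. rewrite <- Es in *.
  apply (dK_rep (exist _ w0 (ex_intro _ r (conj Hs Hw))) r X K HX Hs Hw). auto.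
Qed.

Lemma cK_exists (w : cend FF) X : finite X -> exists K, cK FF X w K.
Proof.
  intros HX. destruct w as [w0 [N [HN Hw]]] eqn:Ew.
  destruct (tail_comp N X HN HX) as [K [HK Ht]].
  exists K. apply (cK_rep (exist _ w0 (ex_intro _ N (conj HN Hw))) N X K HX HN Hw). auto.
Qed.

Lemma cend_eq (w1 w2 : cend FF) : (forall X, finite X -> exists K, cK FF X w1 K /\ cK FF X w2 K) -> w1 = w2.
Proof.
  intros Hc. destruct w1 as [w1 p1], w2 as [w2 p2].
  assert (w1 = w2).
  { pose proof p1 as [N1 [HN1 Hw1]]. pose proof p2 as [N2 [HN2 Hw2]].
    assert (E12 : necklace_equiv FF N1 N2).
    { intros X HX. destruct (Hc X HX) as [K [K1 K2]].
      apply (cK_rep (exist _ w1 p1) N1 X K HX HN1 Hw1) in K1.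
      apply (cK_rep (exist _ w2 p2) N2 X K HX HN2 Hw2) in K2.
      exists K. split; [apply K1|]. split; [apply K1|apply K2]. }
    rewrite Hw1, Hw2. apply functional_extensionality; intros N'.
    apply propositional_extensionality. split; intros [HN' He]; split; auto.
    - apply (neq_trans N2 N1 N'); auto. apply neq_sym; auto.
    - apply (neq_trans N1 N2 N'); auto. }
  subst w2. f_equal. apply proof_irrelevance.
Qed.

Lemma dend_eq (w1 w2 : dend E) : (forall X, finite X -> exists K, dK E X w1 K /\ dK E X w2 K) -> w1 = w2.
Proof.
  intros Hc. destruct w1 as [w1 p1], w2 as [w2 p2].
  assert (w1 = w2).
  { pose proof p1 as [r1 [Hs1 Hw1]]. pose proof p2 as [r2 [Hs2 Hw2]].
    assert (E12 : ray_equiv E r1 r2).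
    { intros X HX. destruct (Hc X HX) as [K [K1 K2]].
      apply (dK_rep (exist _ w1 p1) r1 X K HX Hs1 Hw1) in K1.
      apply (dK_rep (exist _ w2 p2) r2 X K HX Hs2 Hw2) in K2.
      exists K. split; [apply K1|]. split; [apply K1|apply K2]. }
    rewrite Hw1, Hw2. apply functional_extensionality; intros r'.
    apply propositional_extensionality. split; intros [Hs' He]; split; auto.
    - apply (req_trans r2 r1 r'); auto. apply req_sym; auto.
    - apply (req_trans r1 r2 r'); auto. }
  subst w2. f_equal. apply proof_irrelevance.
Qed.

Lemma PP_c w w1 w2 : PP w w1 -> PP w w2 -> w1 = w2.
Proof.
  intros H1 H2. apply cend_eq. intros X HX. destruct (dK_exists w X HX) as [K HK].
  exists K. split; [apply H1|apply H2]; auto.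
Qed.

Lemma PP_d w1 w2 w : PP w1 w -> PP w2 w -> w1 = w2.
Proof.
  intros H1 H2. apply dend_eq. intros X HX. destruct (cK_exists w X HX) as [K HK].
  exists K. split; [apply H1|apply H2]; auto.
Qed.

End Main.

Lemma gen_open_pull {T1 T2 : Type} (B1 : (T1 -> Prop) -> Prop) (B2 : (T2 -> Prop) -> Prop) (f : T1 -> T2) :
  (forall U, B2 U -> gen_open B1 (fun x => U (f x))) ->
  forall U, gen_open B2 U -> gen_open B1 (fun x => U (f x)).
Proof.
  intros Hb U HU. induction HU as [U HU| |U W _ IH1 _ IH2|Fam HF IH].
  - apply Hb; auto.
  - apply go_full.
  - apply (go_inter _ _ _ IH1 IH2).
  - set (Fam' := fun U' => exists U, Fam U /\ U' = (fun x => U (f x))).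
    assert (Heq : (fun x => exists U, Fam U /\ U (f x)) = (fun x => exists U', Fam' U' /\ U' x)).
    { apply functional_extensionality; intros x. apply propositional_extensionality. split.
      - intros [U [HU Hx]]. exists (fun x => U (f x)). split; auto. exists U; auto.
      - intros [U' [[U [HU ->]] Hx]]. eauto. }
    rewrite Heq. apply go_union. intros U' [U [HU ->]]. apply IH; auto.
Qed.

Lemma gen_open_ext {T : Type} (B : (T -> Prop) -> Prop) (U W : T -> Prop) :
  (forall x, U x <-> W x) -> gen_open B U -> gen_open B W.
Proof.
  intros He HU. replace W with U; auto. apply functional_extensionality; intros x.
  apply propositional_extensionality; auto.
Qed.

Theorem lemma4p5 (V : Type) (E : V -> V -> Prop) :
  homeomorphic (dend_subbase E) (cend_subbase (digraph_F E)).
Proof.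
  set (f := fun w => proj1_sig (constructive_indefinite_description _ (PP_a V E w))).
  set (g := fun w' => proj1_sig (constructive_indefinite_description _ (PP_b V E w'))).
  assert (Hf : forall w, PP V E w (f w)).
  { intros w; unfold f; destruct (constructive_indefinite_description _ _); auto. }
  assert (Hg : forall w', PP V E (g w') w').
  { intros w'; unfold g; destruct (constructive_indefinite_description _ _); auto. }
  exists f, g. split; [|split; [|split]].
  - intros x. apply (PP_d V E _ _ (f x)); auto.
  - intros y. apply (PP_c V E (g y)); auto.
  - apply gen_open_pull. intros U [X [K [HX [HK ->]]]].
    apply (gen_open_ext _ (fun x => dK E X x K)).
    + intros x. apply Hf; auto.
    + apply go_base. exists X, K. split; auto. split; auto. apply (is_comp_iff V E); auto.
  - apply gen_open_pull. intros U [X [K [HX [HK ->]]]].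
    apply (gen_open_ext _ (fun y => cK (digraph_F E) X y K)).
    + intros y. symmetry. apply Hg; auto.
    + apply go_base. exists X, K. split; auto. split; auto. apply (is_comp_iff V E); auto.
Qed.
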